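(* Consider the ODE system $S_h'=\Lambda_h-\beta_vI_vS_h-\mu_hS_h$, $I_h'=\beta_vI_vS_h-(\mu_h+\delta+r_1)I_h$, $R_h'=r_1I_h-\mu_hR_h$, $S_v'=\Lambda_v-\beta_hS_vI_h-\mu_vS_v$, $I_v'=\beta_hS_vI_h-\mu_vI_v$, with constant parameters $\Lambda_h,\Lambda_v,\mu_h,\mu_v>0$ and $\beta_h,\beta_v,\delta,r_1\geq0$, and let $\mathcal{R}_0=\sqrt{\frac{\beta_hS_v^0}{\mu_h+\delta+r_1}\cdot\frac{\beta_vS_h^0}{\mu_v}}$ with $S_v^0=\Lambda_v/\mu_v$, $S_h^0=\Lambda_h/\mu_h$. Assume $\mathcal{R}_0>1$. Then the unique endemic equilibrium $E^*$ (the unique nonnegative equilibrium other than $(S_h^0,0,0,S_v^0,0)$) is locally asymptotically stable.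
   Context: This ODE is the age-integrated version of an age-structured malaria model in the case without loss of immunity ($r_2=0$) and with age-independent parameters. *)

(* Defs.v *)
From Stdlib Require Import Reals.
From Coquelicot Require Import Coquelicot.
Open Scope R_scope.

Record state := mkState { Sh : R; Ih : R; Rh : R; Sv : R; Iv : R }.

Definition malaria_field (Lh Lv muh muv bh bv delta r1 : R) (x : state) : state :=
  mkState
    (Lh - bv * Iv x * Sh x - muh * Sh x)
    (bv * Iv x * Sh x - (muh + delta + r1) * Ih x)
    (r1 * Ih x - muh * Rh x)
    (Lv - bh * Sv x * Ih x - muv * Sv x)
    (bh * Sv x * Ih x - muv * Iv x).

Definition repro_number (Lh Lv muh muv bh bv delta r1 : R) : R :=
  sqrt ((bh * (Lv / muv)) / (muh + delta + r1) * ((bv * (Lh / muh)) / muv)).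

Definition DFE (Lh Lv muh muv : R) : state :=
  mkState (Lh / muh) 0 0 (Lv / muv) 0.

Definition origin : state := mkState 0 0 0 0 0.

Definition is_equilibrium (F : state -> state) (E : state) : Prop := F E = origin.

Definition nonneg_state (x : state) : Prop :=
  0 <= Sh x /\ 0 <= Ih x /\ 0 <= Rh x /\ 0 <= Sv x /\ 0 <= Iv x.

Definition dist_state (x y : state) : R :=
  Rmax (Rabs (Sh x - Sh y))
   (Rmax (Rabs (Ih x - Ih y))
    (Rmax (Rabs (Rh x - Rh y))
     (Rmax (Rabs (Sv x - Sv y)) (Rabs (Iv x - Iv y))))).

Definition comp_solves (F : state -> state) (x : R -> state) (pi : state -> R) : Prop :=
  (forall t, 0 < t -> is_derive (fun s => pi (x s)) t (pi (F (x t)))) /\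
  filterlim (fun s => pi (x s)) (at_right 0) (locally (pi (x 0))).

Definition is_solution (F : state -> state) (x : R -> state) : Prop :=
  comp_solves F x Sh /\ comp_solves F x Ih /\ comp_solves F x Rh /\
  comp_solves F x Sv /\ comp_solves F x Iv.

Definition lyapunov_stable (F : state -> state) (E : state) : Prop :=
  forall eps, 0 < eps -> exists d, 0 < d /\
    forall x : R -> state, is_solution F x -> dist_state (x 0) E < d ->
      forall t, 0 <= t -> dist_state (x t) E < eps.

Definition locally_attractive (F : state -> state) (E : state) : Prop :=
  exists d, 0 < d /\
    forall x : R -> state, is_solution F x -> dist_state (x 0) E < d ->
      is_lim (fun t => dist_state (x t) E) p_infty 0.

Definition locally_asymptotically_stable (F : state -> state) (E : state) : Prop :=
  lyapunov_stable F E /\ locally_attractive F E.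

(* Main.v *)
Require Import Defs.
From Stdlib Require Import Reals Psatz Lra.
From Coquelicot Require Import Coquelicot.
Open Scope R_scope.

Definition Vdot (h j g k c P Q m1 m2 r1j mu e n X Y Z W p : R) : R :=
  let Ud := -(P+m1)*X - P*W - P*X*W in
  let Id := P*(X+W+X*W-Y) in
  let Sd := -(Q+m2)*Z - Q*Y - Q*Z*Y in
  let Wd := Q*(Z+Y+Z*Y-W) in
  X*Ud + Y*Id + c*(Z*Sd + W*Wd) + 2*e*(h*X+j*Y)*(Ud+Id)
  + 2*e*(g*Z+k*W)*(Sd+Wd) + 2*n*p*(r1j*Y - mu*p).

Lemma cub3 a b c d : Rabs a <= d -> a*b*c <= d*(b^2+c^2)/2.
Proof.
  intros H.
  assert (Rabs (b*c) <= (b^2+c^2)/2).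
  { assert (0 <= (b-c)^2) by apply pow2_ge_0. assert (0 <= (b+c)^2) by apply pow2_ge_0. unfold Rabs; destruct (Rcase_abs (b*c)); nra. }
  assert (a*(b*c) <= Rabs a * Rabs (b*c)).
  { rewrite <- Rabs_mult. apply Rle_abs. }
  assert (0 <= Rabs (b*c)) by apply Rabs_pos.
  assert (Rabs a * Rabs (b*c) <= d * ((b^2+c^2)/2)).
  { apply Rmult_le_compat; auto using Rabs_pos. }
  lra.
Qed.

Lemma cub2 a b d : Rabs a <= d -> - (b^2*a) <= d*b^2.
Proof.
  intros H. assert (-a <= d) by (unfold Rabs in H; destruct (Rcase_abs a); lra).
  assert (0 <= b^2) by nra. nra.
Qed.

Lemma core (h j g k c P Q m1 m2 r1j mu : R) :
  0 < h -> 0 < j -> 0 < g -> 0 < k -> 0 < c -> 0 < P -> 0 < Q -> 0 <= m1 -> 0 <= m2 ->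
  0 <= r1j -> 0 < mu -> c * Q = P ->
  exists e n d k0, 0 < e /\ 0 < n /\ 0 < d /\ 0 < k0 /\
   forall X Y Z W p, Rabs X <= d -> Rabs Y <= d -> Rabs Z <= d -> Rabs W <= d ->
   Vdot h j g k c P Q m1 m2 r1j mu e n X Y Z W p <= - k0 * (X^2+Y^2+Z^2+W^2+p^2).
Proof.
  intros hh hj hg hk hc hP hQ hm1 hm2 hr hmu hcQ.
  set (K1 := (h*P+j*m1)^2/(j*P)).
  set (K2 := (g*Q+k*m2)^2/(k*Q)).
  assert (hK1 : 0 < K1). { unfold K1. apply Rdiv_lt_0_compat; [|nra].
    assert (0 < h*P+j*m1) by nra. nra. }
  assert (hK2 : 0 < K2). { unfold K2. apply Rdiv_lt_0_compat; [|nra].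
    assert (0 < g*Q+k*m2) by nra. nra. }
  set (e := P/(8*(K1+K2))).
  assert (he : 0 < e) by (unfold e; apply Rdiv_lt_0_compat; lra).
  assert (heK1 : e*K1 <= P/8).
  { unfold e. apply (Rmult_le_reg_r (8*(K1+K2))); [lra|].
    field_simplify; [|lra]. nra. }
  assert (heK2 : e*K2 <= P/8).
  { unfold e. apply (Rmult_le_reg_r (8*(K1+K2))); [lra|].
    field_simplify; [|lra]. nra. }
  clearbody e.
  set (n := e*j*P*mu/(2*(r1j^2+1))).
  assert (hn : 0 < n).
  { unfold n. apply Rdiv_lt_0_compat; [|nra].
    repeat apply Rmult_lt_0_compat; lra. }
  assert (hnr : n*(r1j^2/mu) <= e*j*P/2).
  { unfold n. assert (0 < e*j*P) by (repeat apply Rmult_lt_0_compat; lra).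
    replace (e * j * P * mu / (2 * (r1j ^ 2 + 1)) * (r1j ^ 2 / mu))
      with (e*j*P/2 * (r1j^2/(r1j^2+1))) by (field; nra).
    assert (r1j^2/(r1j^2+1) <= 1).
    { apply (Rmult_le_reg_r (r1j^2+1)); [nra|]. field_simplify; nra. }
    assert (0 <= r1j^2) by apply pow2_ge_0.
    assert (0 <= r1j^2/(r1j^2+1)) by (apply Rle_mult_inv_pos; [apply pow2_ge_0|lra]).
    nra. }
  clearbody n.
  set (d := Rmin (1/24) (Rmin (e*j/6) (e*k*Q/(3*P)))).
  assert (hd : 0 < d).
  { unfold d. repeat apply Rmin_pos; try lra.
    - apply Rdiv_lt_0_compat; nra.
    - apply Rdiv_lt_0_compat; [|lra]. repeat apply Rmult_lt_0_compat; lra. }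
  assert (hd1 : d <= 1/24) by apply Rmin_l.
  assert (hd2 : d <= e*j/6) by (eapply Rle_trans; [apply Rmin_r|apply Rmin_l]).
  assert (hd3 : d <= e*k*Q/(3*P)) by (eapply Rle_trans; [apply Rmin_r|apply Rmin_r]).
  assert (hd3' : 3*P*d <= e*k*Q).
  { apply (Rmult_le_compat_l (3*P)) in hd3; [|lra].
    replace (3*P*(e*k*Q/(3*P))) with (e*k*Q) in hd3 by (field; lra). lra. }
  clearbody d.
  set (cX := P/16). set (cY := e*j*P/4). set (cW := e*k*Q/2). set (cp := n*mu).
  set (k0 := Rmin (Rmin cX cY) (Rmin cW cp)).
  assert (hk0 : 0 < k0).
  { unfold k0, cX, cY, cW, cp. repeat apply Rmin_pos.
    - lra.
    - assert (0 < e*j*P) by (repeat apply Rmult_lt_0_compat; lra). lra.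
    - assert (0 < e*k*Q) by (repeat apply Rmult_lt_0_compat; lra). lra.
    - nra. }
  exists e, n, d, k0. split; [lra|split;[lra|split;[lra|split;[lra|]]]].
  intros X Y Z W p hX hY hZ hW.
  assert (k0X : k0 <= cX) by (unfold k0; eapply Rle_trans; [apply Rmin_l|apply Rmin_l]).
  assert (k0Y : k0 <= cY) by (unfold k0; eapply Rle_trans; [apply Rmin_l|apply Rmin_r]).
  assert (k0W : k0 <= cW) by (unfold k0; eapply Rle_trans; [apply Rmin_r|apply Rmin_l]).
  assert (k0p : k0 <= cp) by (unfold k0; eapply Rle_trans; [apply Rmin_r|apply Rmin_r]).
  assert (Eid : Vdot h j g k c P Q m1 m2 r1j mu e n X Y Z W p =
    - m1*X^2 - c*m2*Z^2
    - P*(X^2+Z^2+(W-Y)^2+X*(W-Y)-Z*(W-Y))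
    + P*(X*Y*W - X^2*W + Z*W*Y - Z^2*Y)
    - 2*e*(h*X+j*Y)*(m1*X+P*Y) - 2*e*(g*Z+k*W)*(m2*Z+Q*W)
    + 2*n*p*(r1j*Y - mu*p)).
  { unfold Vdot. rewrite <- hcQ. ring. }
  rewrite Eid.
  assert (F1 : X^2+Z^2+(W-Y)^2+X*(W-Y)-Z*(W-Y) >= (X^2+Z^2)/4).
  { assert (0 <= (X+2/3*(W-Y))^2) by apply pow2_ge_0.
    assert (0 <= (Z-2/3*(W-Y))^2) by apply pow2_ge_0.
    assert (0 <= (W-Y)^2) by apply pow2_ge_0. nra. }
  assert (B1 : - 2*(h*X+j*Y)*(m1*X+P*Y) <= K1*X^2 - j*P*Y^2).
  { assert (0 <= ((h*P+j*m1)*X + j*P*Y)^2/(j*P)).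
    { apply Rle_mult_inv_pos; [apply pow2_ge_0| apply Rmult_lt_0_compat; lra]. }
    assert (((h*P+j*m1)*X + j*P*Y)^2/(j*P) =
      K1*X^2 + 2*(h*P+j*m1)*X*Y + j*P*Y^2) by (unfold K1; field; nra).
    assert (0 <= h*m1*X^2) by (apply Rmult_le_pos; [nra|apply pow2_ge_0]).
    lra. }
  assert (B2 : - 2*(g*Z+k*W)*(m2*Z+Q*W) <= K2*Z^2 - k*Q*W^2).
  { assert (0 <= ((g*Q+k*m2)*Z + k*Q*W)^2/(k*Q)).
    { apply Rle_mult_inv_pos; [apply pow2_ge_0| apply Rmult_lt_0_compat; lra]. }
    assert (((g*Q+k*m2)*Z + k*Q*W)^2/(k*Q) =
      K2*Z^2 + 2*(g*Q+k*m2)*Z*W + k*Q*W^2) by (unfold K2; field; nra).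
    assert (0 <= g*m2*Z^2) by (apply Rmult_le_pos; [nra|apply pow2_ge_0]).
    lra. }
  assert (B3 : 2*n*p*(r1j*Y - mu*p) <= - n*mu*p^2 + n*(r1j^2/mu)*Y^2).
  { assert (0 <= (mu*p - r1j*Y)^2/mu) by (apply Rle_mult_inv_pos; [apply pow2_ge_0|lra]).
    assert ((mu*p - r1j*Y)^2/mu = mu*p^2 - 2*r1j*p*Y + r1j^2/mu*Y^2) by (field; lra).
    nra. }
  assert (C1 : X*Y*W <= d*(Y^2+X^2)/2).
  { replace (X*Y*W) with (W*Y*X) by ring. apply cub3; auto. }
  assert (C2 : - (X^2*W) <= d*X^2) by (apply cub2; auto).
  assert (C3 : Z*W*Y <= d*(Z^2+W^2)/2).
  { replace (Z*W*Y) with (Y*Z*W) by ring. apply cub3; auto. }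
  assert (C4 : - (Z^2*Y) <= d*Z^2) by (apply cub2; auto).
  assert (HX2 : 0 <= X^2) by apply pow2_ge_0. assert (HY2 : 0 <= Y^2) by apply pow2_ge_0.
  assert (HZ2 : 0 <= Z^2) by apply pow2_ge_0. assert (HW2 : 0 <= W^2) by apply pow2_ge_0.
  assert (Hp2 : 0 <= p^2) by apply pow2_ge_0.
  assert (Cub : P*(X*Y*W - X^2*W + Z*W*Y - Z^2*Y) <= 3/2*P*d*(X^2+Y^2+Z^2+W^2)).
  { assert (0 <= d*X^2) by (apply Rmult_le_pos; lra).
    assert (0 <= d*Z^2) by (apply Rmult_le_pos; lra).
    assert (0 <= d*Y^2) by (apply Rmult_le_pos; lra).
    assert (0 <= d*W^2) by (apply Rmult_le_pos; lra).
    assert (P*(X*Y*W - X^2*W + Z*W*Y - Z^2*Y) <= P*(3/2*d*(X^2+Y^2+Z^2+W^2))).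
    { apply Rmult_le_compat_l; lra. }
    lra. }
  assert (0 <= m1*X^2) by (apply Rmult_le_pos; lra).
  assert (0 <= c*m2*Z^2) by (apply Rmult_le_pos; [apply Rmult_le_pos|]; lra).
  assert (S1 : e*(- 2*(h*X+j*Y)*(m1*X+P*Y)) <= e*(K1*X^2 - j*P*Y^2)) by (apply Rmult_le_compat_l; lra).
  assert (S2 : e*(- 2*(g*Z+k*W)*(m2*Z+Q*W)) <= e*(K2*Z^2 - k*Q*W^2)) by (apply Rmult_le_compat_l; lra).
  assert (T : P*((X^2+Z^2)/4) <= P*(X^2+Z^2+(W-Y)^2+X*(W-Y)-Z*(W-Y))) by (apply Rmult_le_compat_l; lra).
  assert (c1 : 3/2*P*d <= P/16).
  { assert (P*d <= P*(1/24)) by (apply Rmult_le_compat_l; lra). lra. }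
  assert (c2 : 3/2*P*d <= e*j*P/4).
  { assert (P*d <= P*(e*j/6)) by (apply Rmult_le_compat_l; lra). lra. }
  assert (c3 : 3/2*P*d <= e*k*Q/2) by lra.
  assert (Hd1 : 3/2*P*d*X^2 <= P/16*X^2) by (apply Rmult_le_compat_r; lra).
  assert (Hd2 : 3/2*P*d*Z^2 <= P/16*Z^2) by (apply Rmult_le_compat_r; lra).
  assert (Hd3 : 3/2*P*d*Y^2 <= e*j*P/4*Y^2) by (apply Rmult_le_compat_r; lra).
  assert (Hd4 : 3/2*P*d*W^2 <= e*k*Q/2*W^2) by (apply Rmult_le_compat_r; lra).
  assert (e*K1*X^2 <= P/8*X^2) by (apply Rmult_le_compat_r; lra).
  assert (e*K2*Z^2 <= P/8*Z^2) by (apply Rmult_le_compat_r; lra).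
  assert (n*(r1j^2/mu)*Y^2 <= e*j*P/2*Y^2) by (apply Rmult_le_compat_r; lra).
  assert (k0*X^2 <= cX*X^2) by (apply Rmult_le_compat_r; lra).
  assert (k0*Y^2 <= cY*Y^2) by (apply Rmult_le_compat_r; lra).
  assert (k0*Z^2 <= cX*Z^2) by (apply Rmult_le_compat_r; lra).
  assert (k0*W^2 <= cW*W^2) by (apply Rmult_le_compat_r; lra).
  assert (k0*p^2 <= cp*p^2) by (apply Rmult_le_compat_r; lra).
  unfold cX, cY, cW, cp in *.
  lra.
Qed.

Lemma ball_R x e y : ball x e y <-> Rabs (y - x) < e.
Proof. unfold ball; simpl; unfold AbsRing_ball, abs, minus, plus, opp; simpl. tauto. Qed.

Definition RC (f : R -> R) (s : R) : Prop :=
  forall eps, 0 < eps -> exists d, 0 < d /\ forall t, s <= t < s + d -> Rabs (f t - f s) < eps.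
Definition TC (f : R -> R) (s : R) : Prop :=
  forall eps, 0 < eps -> exists d, 0 < d /\ forall t, Rabs (t - s) < d -> Rabs (f t - f s) < eps.

Lemma TC_RC f s : TC f s -> RC f s.
Proof.
  intros H eps he. destruct (H eps he) as [d [hd H2]]. exists d; split; auto.
  intros t ht. apply H2. rewrite Rabs_right; lra.
Qed.

Lemma TC_of_lim f s : filterlim f (locally s) (locally (f s)) -> TC f s.
Proof.
  intros H eps he. apply filterlim_locally with (eps := mkposreal eps he) in H.
  destruct H as [d Hd]. exists d; split; [apply cond_pos|].
  intros t ht. specialize (Hd t). rewrite ball_R in Hd. apply Hd. apply ball_R. exact ht.
Qed.

Lemma RC_of_lim f s : filterlim f (at_right s) (locally (f s)) -> RC f s.
Proof.
  intros H eps he. apply filterlim_locally with (eps := mkposreal eps he) in H.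
  destruct H as [d Hd]. exists d; split; [apply cond_pos|].
  intros t ht. destruct (Req_dec t s) as [->|hne].
  - rewrite Rminus_diag, Rabs_R0; exact he.
  - specialize (Hd t). rewrite ball_R in Hd. apply Hd.
    + apply ball_R. rewrite Rabs_right; simpl; lra.
    + lra.
Qed.

Lemma TC_of_derive f s d : is_derive f s d -> TC f s.
Proof.
  intros H. apply TC_of_lim. exact (@ex_derive_continuous R_AbsRing R_NormedModule f s (ex_intro _ d H)).
Qed.

Lemma mono (psi dpsi : R -> R) (L : R) :
  (forall t, 0 < t -> is_derive psi t (dpsi t)) ->
  RC psi 0 ->
  (forall t, 0 < t -> psi t < L -> dpsi t <= 0) ->
  psi 0 < L -> forall t, 0 <= t -> psi t <= psi 0.
Proof.
  intros Hd Hrc0 Hneg HL t1 ht1.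
  destruct (Rle_dec (psi t1) (psi 0)) as [ok|Hbad]; [exact ok|exfalso].
  apply Rnot_le_lt in Hbad.
  assert (RCall : forall s, 0 <= s -> RC psi s).
  { intros s hs. destruct (Req_dec s 0) as [->|hne]; [exact Hrc0|].
    apply TC_RC. apply (TC_of_derive psi s (dpsi s)). apply Hd. lra. }
  set (E := fun s => 0 <= s <= t1 /\ forall u, 0 <= u <= s -> psi u <= psi 0).
  assert (Eb : bound E). { exists t1. intros s [hs _]. lra. }
  assert (E0 : E 0). { split; [lra|]. intros u hu. replace u with 0 by lra. lra. }
  destruct (completeness E Eb (ex_intro _ 0 E0)) as [s0 [Hub Hlub]].
  assert (hs0 : 0 <= s0) by (apply Hub; exact E0).
  assert (hs1 : s0 <= t1). { apply Hlub. intros s [hs _]. lra. }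
  assert (Hb : forall u, 0 <= u < s0 -> psi u <= psi 0).
  { intros u hu. destruct (Rle_dec (psi u) (psi 0)) as [ok|nok]; [exact ok|exfalso].
    assert (UB : is_upper_bound E u).
    { intros s [hs Hs]. destruct (Rle_dec s u) as [ok|nk]; [exact ok|exfalso].
      apply nok. apply Hs. lra. }
    specialize (Hlub u UB). lra. }
  assert (Hc : psi s0 <= psi 0).
  { destruct (Req_dec s0 0) as [->|hne]; [lra|].
    destruct (Rle_dec (psi s0) (psi 0)) as [ok|nok]; [exact ok|exfalso].
    apply Rnot_le_lt in nok.
    destruct (TC_of_derive psi s0 (dpsi s0) (Hd s0 ltac:(lra)) (psi s0 - psi 0) ltac:(lra))
      as [d [hd Hd2]].
    set (u := s0 - Rmin d s0 / 2).
    assert (0 < Rmin d s0) by (apply Rmin_pos; lra).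
    assert (Rmin d s0 <= d) by apply Rmin_l.
    assert (Rmin d s0 <= s0) by apply Rmin_r.
    assert (Hu : Rabs (psi u - psi s0) < psi s0 - psi 0).
    { apply Hd2. unfold u. rewrite Rabs_left; lra. }
    assert (psi u <= psi 0) by (apply Hb; unfold u; lra).
    apply Rabs_def2 in Hu. lra. }
  assert (hlt : s0 < t1).
  { destruct (Req_dec s0 t1) as [<-|]; [lra|lra]. }
  destruct (RCall s0 hs0 (L - psi 0) ltac:(lra)) as [d [hd Hd2]].
  assert (HL2 : forall u, s0 <= u < s0 + d -> psi u < L).
  { intros u hu. specialize (Hd2 u hu). apply Rabs_def2 in Hd2. lra. }
  set (d' := Rmin d (t1 - s0)).
  assert (hd' : 0 < d') by (apply Rmin_pos; lra).
  assert (d' <= d) by apply Rmin_l. assert (d' <= t1 - s0) by apply Rmin_r.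
  assert (Hf : forall u, s0 < u < s0 + d' -> psi u <= psi s0).
  { intros u hu.
    destruct (Rle_dec (psi u) (psi s0)) as [ok|nok]; [exact ok|exfalso].
    apply Rnot_le_lt in nok.
    destruct (RCall s0 hs0 (psi u - psi s0) ltac:(lra)) as [d2 [hd2 Hd3]].
    set (s' := s0 + Rmin d2 (u - s0) / 2).
    assert (0 < Rmin d2 (u - s0)) by (apply Rmin_pos; lra).
    assert (Rmin d2 (u - s0) <= d2) by apply Rmin_l.
    assert (Rmin d2 (u - s0) <= u - s0) by apply Rmin_r.
    assert (Hs' : Rabs (psi s' - psi s0) < psi u - psi s0) by (apply Hd3; unfold s'; lra).
    apply Rabs_def2 in Hs'.
    destruct (MVT_gen psi s' u dpsi) as [c [hc Hc2]].
    - intros x hx. rewrite Rmin_left in hx by (unfold s'; lra).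
      rewrite Rmax_right in hx by (unfold s'; lra). apply Hd. unfold s' in hx. lra.
    - intros x hx. rewrite Rmin_left in hx by (unfold s'; lra).
      rewrite Rmax_right in hx by (unfold s'; lra).
      apply continuity_pt_filterlim.
      assert (Hx : is_derive psi x (dpsi x)) by (apply Hd; unfold s' in hx; lra).
      exact (@ex_derive_continuous R_AbsRing R_NormedModule psi x (ex_intro _ _ Hx)).
    - rewrite Rmin_left in hc by (unfold s'; lra).
      rewrite Rmax_right in hc by (unfold s'; lra).
      assert (0 < c) by (unfold s' in hc; lra).
      assert (dpsi c <= 0).
      { apply Hneg; [lra|]. apply HL2. unfold s' in hc. lra. }
      assert (dpsi c * (u - s') <= 0).
      { apply Rmult_le_0_r; [lra|]. unfold s'; lra. }
      lra. }
  set (s1 := s0 + d'/2).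
  assert (E s1).
  { split; [unfold s1; lra|]. intros u hu.
    destruct (Rlt_le_dec u s0) as [h1|h1]; [apply Hb; lra|].
    destruct (Req_dec u s0) as [->|h2]; [exact Hc|].
    assert (psi u <= psi s0) by (apply Hf; unfold s1 in hu; lra). lra. }
  assert (s1 <= s0) by (apply Hub; assumption).
  unfold s1 in *. lra.
Qed.

Section FL.
Context {T : Type} {F : (T -> Prop) -> Prop} {FF : Filter F}.
Lemma fl_plus (f g : T -> R) a b : filterlim f F (locally a) -> filterlim g F (locally b) ->
  filterlim (fun t => f t + g t) F (locally (a + b)).
Proof. intros Hf Hg. apply (filterlim_comp_2 f g Rplus Hf Hg). exact (filterlim_plus (V:=R_NormedModule) a b). Qed.
Lemma fl_mult (f g : T -> R) a b : filterlim f F (locally a) -> filterlim g F (locally b) ->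
  filterlim (fun t => f t * g t) F (locally (a * b)).
Proof. intros Hf Hg. apply (filterlim_comp_2 f g Rmult Hf Hg). exact (filterlim_mult (K:=R_AbsRing) a b). Qed.
Lemma fl_const (a : R) : filterlim (fun _ : T => a) F (locally a).
Proof. apply filterlim_const. Qed.
End FL.

Lemma fl_id0 : filterlim (fun t : R => t) (at_right 0) (locally 0).
Proof.
  apply filterlim_locally. intros eps. exists eps. intros y hy _. exact hy.
Qed.

Ltac req := cbv beta; match goal with |- ?a = ?b => change (@eq R a b) end; ring.
Lemma D_eq (f : R -> R) x d1 d2 : is_derive f x d1 -> d1 = d2 -> is_derive f x d2.
Proof. intros H ->; exact H. Qed.
Lemma D_plus (f g : R -> R) x df dg : is_derive f x df -> is_derive g x dg ->
  is_derive (fun t => f t + g t) x (df + dg).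
Proof. intros; exact (is_derive_plus f g x df dg H H0). Qed.
Lemma D_minus (f g : R -> R) x df dg : is_derive f x df -> is_derive g x dg ->
  is_derive (fun t => f t - g t) x (df - dg).
Proof. intros; exact (is_derive_minus f g x df dg H H0). Qed.
Lemma D_mult (f g : R -> R) x df dg : is_derive f x df -> is_derive g x dg ->
  is_derive (fun t => f t * g t) x (df * g x + f x * dg).
Proof. intros; exact (is_derive_mult f g x df dg H H0 Rmult_comm). Qed.
Lemma D_const (a : R) x : is_derive (fun _ => a) x 0.
Proof. exact (is_derive_const a x). Qed.
Lemma D_id x : is_derive (fun t => t) x 1.
Proof. exact (is_derive_id x). Qed.

Lemma decay (g dg : R -> R) (L kap : R) :
  0 < kap ->
  (forall t, 0 < t -> is_derive g t (dg t)) ->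
  filterlim g (at_right 0) (locally (g 0)) ->
  (forall t, 0 <= t -> 0 <= g t) ->
  (forall t, 0 < t -> g t < L -> dg t <= - kap * g t) ->
  g 0 < L -> forall t, 0 <= t -> g t * (1 + kap * t) <= g 0.
Proof.
  intros hk Hd Hc Hpos Hneg HL t ht.
  assert (H := mono (fun t => g t * (1 + kap * t)) (fun t => dg t * (1 + kap*t) + g t * kap) L).
  enough (Hm : g t * (1 + kap * t) <= g 0 * (1 + kap * 0)) by (rewrite Rmult_0_r, Rplus_0_r, Rmult_1_r in Hm; exact Hm).
  apply H; auto.
  - intros s hs. eapply D_eq. apply D_mult. apply Hd; auto.
    apply D_plus. apply D_const. apply D_mult. apply D_const. apply D_id. cbv beta; match goal with |- ?a = ?b => change (@eq R a b) end; ring.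
  - apply RC_of_lim. apply fl_mult. exact Hc. apply fl_plus. apply fl_const.
    apply fl_mult. apply fl_const. apply fl_id0.
  - intros s hs Hl. assert (0 <= g s) by (apply Hpos; lra).
    assert (g s <= g s * (1 + kap * s)).
    { assert (0 <= g s * (kap * s)) by (apply Rmult_le_pos; [lra|apply Rmult_le_pos; lra]). lra. }
    assert (dg s <= - kap * g s) by (apply Hneg; lra).
    assert (dg s * (1 + kap*s) <= - kap * g s * (1 + kap * s)).
    { apply Rmult_le_compat_r; [|lra]. assert (0 <= kap*s) by (apply Rmult_le_pos; lra). lra. }
    assert (0 <= kap * kap * s * g s).
    { apply Rmult_le_pos; [apply Rmult_le_pos; [apply Rmult_le_pos|]|]; lra. }
    lra.
  - lra.
Qed.

Definition Vq (h j g k c e n X Y Z W p : R) : R :=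
  h*X*X + j*Y*Y + c*(g*Z*Z + k*W*W) + 2*e*((h*X+j*Y)*(h*X+j*Y))
  + 2*e*((g*Z+k*W)*(g*Z+k*W)) + 2*n*(p*p).

Lemma D_aff (f : R -> R) t df a b : is_derive f t df ->
  is_derive (fun s => (f s - a)/b) t (df/b).
Proof.
  intros H. unfold Rdiv. eapply D_eq.
  apply D_mult. apply D_minus. exact H. apply D_const. apply D_const. req.
Qed.

Ltac dstep := match goal with
 | |- is_derive (fun _ => ?a) _ _ => apply D_const
 | H : is_derive ?f ?t _ |- is_derive ?f ?t _ => exact H
 | |- is_derive (fun s => @?A s + @?B s) _ _ => apply D_plus
 | |- is_derive (fun s => @?A s * @?B s) _ _ => apply D_mult
 end.

Lemma D_Vq h j g k c e n (fX fY fZ fW fp : R -> R) t dX dY dZ dW dp :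
  is_derive fX t dX -> is_derive fY t dY -> is_derive fZ t dZ -> is_derive fW t dW ->
  is_derive fp t dp ->
  is_derive (fun s => Vq h j g k c e n (fX s) (fY s) (fZ s) (fW s) (fp s)) t
   (2*(h*fX t*dX + j*fY t*dY + c*(g*fZ t*dZ + k*fW t*dW)
     + 2*e*(h*fX t+j*fY t)*(h*dX+j*dY) + 2*e*(g*fZ t+k*fW t)*(g*dZ+k*dW) + 2*n*fp t*dp)).
Proof.
  intros HX HY HZ HW Hp. unfold Vq. eapply D_eq.
  repeat dstep.
  req.
Qed.


Lemma ident (Lh Lv muh muv bh bv A r1 h j g k rr c e n X Y Z W p sh ih rh sv iv : R) :
  0 < h -> 0 < j -> 0 < g -> 0 < k -> 0 < muh ->
  Lh = bv*k*h + muh*h -> A = bv*k*h/j -> rr = r1*j/muh -> Lv = bh*g*j + muv*g ->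
  muv = bh*g*j/k ->
  sh = h + h*X -> ih = j + j*Y -> sv = g + g*Z -> iv = k + k*W -> rh = rr + p ->
  2*(h*X*((Lh - bv*iv*sh - muh*sh)/h) + j*Y*((bv*iv*sh - A*ih)/j)
     + c*(g*Z*((Lv - bh*sv*ih - muv*sv)/g) + k*W*((bh*sv*ih - muv*iv)/k))
     + 2*e*(h*X+j*Y)*(h*((Lh - bv*iv*sh - muh*sh)/h)+j*((bv*iv*sh - A*ih)/j))
     + 2*e*(g*Z+k*W)*(g*((Lv - bh*sv*ih - muv*sv)/g)+k*((bh*sv*ih - muv*iv)/k))
     + 2*n*p*(r1*ih - muh*rh))
  = 2 * Vdot h j g k c (bv*k*h) (bh*g*j) (muh*h) (muv*g) (r1*j) muh e n X Y Z W p.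
Proof.
  intros hh hj hg hk hmuh HLh HA Hrr HLv Hmuv Hsh Hih Hsv Hiv Hrh.
  subst Lv. subst muv Lh A rr sh ih sv iv rh.
  unfold Vdot. field. lra.
Qed.

Lemma sqle (a : R) : 0 <= a * a.
Proof. apply Rle_0_sqr. Qed.

Lemma Vq_terms h j g k c e n X Y Z W p :
  0 < h -> 0 < j -> 0 < g -> 0 < k -> 0 < c -> 0 < e -> 0 < n ->
  let V := Vq h j g k c e n X Y Z W p in
  0 <= V /\ h*X*X <= V /\ j*Y*Y <= V /\ c*g*Z*Z <= V /\ c*k*W*W <= V /\ 2*n*(p*p) <= V.
Proof.
  intros hh hj hg hk hc he hn V. unfold V, Vq.
  assert (0 <= h*X*X) by (rewrite Rmult_assoc; apply Rmult_le_pos; [lra|apply sqle]).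
  assert (0 <= j*Y*Y) by (rewrite Rmult_assoc; apply Rmult_le_pos; [lra|apply sqle]).
  assert (0 <= g*Z*Z) by (rewrite Rmult_assoc; apply Rmult_le_pos; [lra|apply sqle]).
  assert (0 <= k*W*W) by (rewrite Rmult_assoc; apply Rmult_le_pos; [lra|apply sqle]).
  assert (0 <= c*(g*Z*Z)) by (apply Rmult_le_pos; lra).
  assert (0 <= c*(k*W*W)) by (apply Rmult_le_pos; lra).
  assert (0 <= 2*e*((h*X+j*Y)*(h*X+j*Y))) by (apply Rmult_le_pos; [lra|apply sqle]).
  assert (0 <= 2*e*((g*Z+k*W)*(g*Z+k*W))) by (apply Rmult_le_pos; [lra|apply sqle]).
  assert (0 <= 2*n*(p*p)) by (apply Rmult_le_pos; [lra|apply sqle]).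
  assert (c*(g*Z*Z + k*W*W) = c*(g*Z*Z) + c*(k*W*W)) by ring.
  assert (c*g*Z*Z = c*(g*Z*Z)) by ring. assert (c*k*W*W = c*(k*W*W)) by ring.
  repeat split; lra.
Qed.

Lemma Vq_up h j g k c e n X Y Z W p :
  0 < h -> 0 < j -> 0 < g -> 0 < k -> 0 < c -> 0 < e -> 0 < n ->
  Vq h j g k c e n X Y Z W p <=
  (h + j + c*g + c*k + 4*e*(h*h+j*j) + 4*e*(g*g+k*k) + 2*n) * (X*X+Y*Y+Z*Z+W*W+p*p).
Proof.
  intros hh hj hg hk hc he hn. unfold Vq.
  assert (A1 : (h*X+j*Y)*(h*X+j*Y) <= 2*(h*h)*(X*X) + 2*(j*j)*(Y*Y)).
  { assert (0 <= (h*X-j*Y)*(h*X-j*Y)) by apply sqle. nra. }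
  assert (A2 : (g*Z+k*W)*(g*Z+k*W) <= 2*(g*g)*(Z*Z) + 2*(k*k)*(W*W)).
  { assert (0 <= (g*Z-k*W)*(g*Z-k*W)) by apply sqle. nra. }
  assert (0 <= X*X) by apply sqle. assert (0 <= Y*Y) by apply sqle.
  assert (0 <= Z*Z) by apply sqle. assert (0 <= W*W) by apply sqle.
  assert (0 <= p*p) by apply sqle.
  assert (0 <= h*h) by apply sqle. assert (0 <= j*j) by apply sqle.
  assert (0 <= g*g) by apply sqle. assert (0 <= k*k) by apply sqle.
  assert (2*e*((h*X+j*Y)*(h*X+j*Y)) <= 2*e*(2*(h*h)*(X*X) + 2*(j*j)*(Y*Y)))
    by (apply Rmult_le_compat_l; lra).
  assert (2*e*((g*Z+k*W)*(g*Z+k*W)) <= 2*e*(2*(g*g)*(Z*Z) + 2*(k*k)*(W*W)))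
    by (apply Rmult_le_compat_l; lra).
  set (K := h + j + c*g + c*k + 4*e*(h*h+j*j) + 4*e*(g*g+k*k) + 2*n).
  assert (0 <= c*g) by (apply Rmult_le_pos; lra).
  assert (0 <= c*k) by (apply Rmult_le_pos; lra).
  assert (0 <= 4*e*(h*h+j*j)) by (apply Rmult_le_pos; lra).
  assert (0 <= 4*e*(g*g+k*k)) by (apply Rmult_le_pos; lra).
  assert (h*(X*X) <= K*(X*X)) by (apply Rmult_le_compat_r; unfold K; lra).
  assert (j*(Y*Y) <= K*(Y*Y)) by (apply Rmult_le_compat_r; unfold K; lra).
  assert (Kp : 0 <= K) by (unfold K; lra).
  assert ((c*g + 4*e*(g*g))*(Z*Z) <= K*(Z*Z)).
  { apply Rmult_le_compat_r; [lra|]. unfold K.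
    assert (0 <= 4*e*(k*k)) by (apply Rmult_le_pos; lra).
    assert (4*e*(g*g+k*k) = 4*e*(g*g) + 4*e*(k*k)) by ring. lra. }
  assert ((c*k + 4*e*(k*k))*(W*W) <= K*(W*W)).
  { apply Rmult_le_compat_r; [lra|]. unfold K.
    assert (0 <= 4*e*(g*g)) by (apply Rmult_le_pos; lra).
    assert (4*e*(g*g+k*k) = 4*e*(g*g) + 4*e*(k*k)) by ring. lra. }
  assert ((4*e*(h*h))*(X*X) + h*(X*X) <= K*(X*X)).
  { rewrite <- Rmult_plus_distr_r. apply Rmult_le_compat_r; [lra|]. unfold K.
    assert (0 <= 4*e*(j*j)) by (apply Rmult_le_pos; lra).
    assert (4*e*(h*h+j*j) = 4*e*(h*h) + 4*e*(j*j)) by ring. lra. }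
  assert ((4*e*(j*j))*(Y*Y) + j*(Y*Y) <= K*(Y*Y)).
  { rewrite <- Rmult_plus_distr_r. apply Rmult_le_compat_r; [lra|]. unfold K.
    assert (0 <= 4*e*(h*h)) by (apply Rmult_le_pos; lra).
    assert (4*e*(h*h+j*j) = 4*e*(h*h) + 4*e*(j*j)) by ring. lra. }
  assert (2*n*(p*p) <= K*(p*p)) by (apply Rmult_le_compat_r; unfold K; lra).
  fold K. lra.
Qed.

Lemma small_d A B : 0 < A -> 0 < B -> exists d, 0 < d /\ forall z, 0 <= z < d -> A*(z*z) < B.
Proof.
  intros hA hB. exists (Rmin 1 (B/A)). split.
  - apply Rmin_pos; [lra|]. apply Rdiv_lt_0_compat; lra.
  - intros z [hz1 hz2].
    assert (Rmin 1 (B/A) <= 1) by apply Rmin_l.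
    assert (Rmin 1 (B/A) <= B/A) by apply Rmin_r.
    assert (z*z <= z) by nra.
    assert (z < B/A) by lra.
    assert (A*z < A*(B/A)) by (apply Rmult_lt_compat_l; lra).
    replace (A*(B/A)) with B in * by (field; lra).
    assert (A*(z*z) <= A*z) by (apply Rmult_le_compat_l; lra). lra.
Qed.

Lemma dist_ge x y :
  Rabs (Sh x - Sh y) <= dist_state x y /\ Rabs (Ih x - Ih y) <= dist_state x y /\
  Rabs (Rh x - Rh y) <= dist_state x y /\ Rabs (Sv x - Sv y) <= dist_state x y /\
  Rabs (Iv x - Iv y) <= dist_state x y.
Proof.
  unfold dist_state.
  set (a1 := Rabs (Sh x - Sh y)). set (a2 := Rabs (Ih x - Ih y)).
  set (a3 := Rabs (Rh x - Rh y)). set (a4 := Rabs (Sv x - Sv y)). set (a5 := Rabs (Iv x - Iv y)).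
  assert (H1 := Rmax_l a1 (Rmax a2 (Rmax a3 (Rmax a4 a5)))).
  assert (H2 := Rmax_r a1 (Rmax a2 (Rmax a3 (Rmax a4 a5)))).
  assert (H3 := Rmax_l a2 (Rmax a3 (Rmax a4 a5))).
  assert (H4 := Rmax_r a2 (Rmax a3 (Rmax a4 a5))).
  assert (H5 := Rmax_l a3 (Rmax a4 a5)).
  assert (H6 := Rmax_r a3 (Rmax a4 a5)).
  assert (H7 := Rmax_l a4 a5). assert (H8 := Rmax_r a4 a5).
  repeat split; lra.
Qed.

Lemma dist_lt x y eps :
  Rabs (Sh x - Sh y) < eps -> Rabs (Ih x - Ih y) < eps ->
  Rabs (Rh x - Rh y) < eps -> Rabs (Sv x - Sv y) < eps ->
  Rabs (Iv x - Iv y) < eps -> dist_state x y < eps.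
Proof.
  intros. unfold dist_state. repeat apply Rmax_lub_lt; assumption.
Qed.

Lemma abs_sq a b : a*a < b*b -> 0 < b -> Rabs a < b.
Proof.
  intros H hb. unfold Rabs. destruct (Rcase_abs a); nra.
Qed.

Lemma sq_abs a d : Rabs a <= d -> a*a <= d*d.
Proof.
  intros H. unfold Rabs in H. destruct (Rcase_abs a); nra.
Qed.

Lemma fl_aff {T} {F : (T -> Prop) -> Prop} {FF : Filter F} (f : T -> R) a b c :
  filterlim f F (locally a) -> filterlim (fun s => (f s - b)/c) F (locally ((a-b)/c)).
Proof.
  intros H. unfold Rdiv, Rminus. apply fl_mult; [apply fl_plus; [exact H|apply fl_const]|apply fl_const].
Qed.

Lemma fl_Vq {T} {F : (T -> Prop) -> Prop} {FF : Filter F} h j g k c e n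
  (fX fY fZ fW fp : T -> R) aX aY aZ aW ap :
  filterlim fX F (locally aX) -> filterlim fY F (locally aY) ->
  filterlim fZ F (locally aZ) -> filterlim fW F (locally aW) ->
  filterlim fp F (locally ap) ->
  filterlim (fun s => Vq h j g k c e n (fX s) (fY s) (fZ s) (fW s) (fp s)) F
    (locally (Vq h j g k c e n aX aY aZ aW ap)).
Proof.
  intros. unfold Vq.
  repeat first [ apply fl_plus | apply fl_mult | apply fl_const | assumption ].
Qed.

Lemma las_model (Lh Lv muh muv bh bv delta r1 h j g k rr : R) :
  0 < muh -> 0 < muv -> 0 < bh -> 0 < bv -> 0 <= r1 ->
  0 < h -> 0 < j -> 0 < g -> 0 < k ->
  Lh - bv*k*h - muh*h = 0 -> bv*k*h - (muh+delta+r1)*j = 0 -> r1*j - muh*rr = 0 ->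
  Lv - bh*g*j - muv*g = 0 -> bh*g*j - muv*k = 0 ->
  locally_asymptotically_stable (malaria_field Lh Lv muh muv bh bv delta r1) (mkState h j rr g k).
Proof.
  intros hmuh hmuv hbh hbv hr1 hh hj hg hk E1 E2 E3 E4 E5.
  assert (HLh : Lh = bv*k*h + muh*h) by lra.
  assert (HA : muh+delta+r1 = bv*k*h/j).
  { assert (bv*k*h = (muh+delta+r1)*j) by lra. rewrite H. field. lra. }
  assert (Hrr : rr = r1*j/muh).
  { assert (r1*j = muh*rr) by lra. rewrite H. field. lra. }
  assert (HLv : Lv = bh*g*j + muv*g) by lra.
  assert (Hmuv : muv = bh*g*j/k).
  { assert (bh*g*j = muv*k) by lra. rewrite H. field. lra. }
  set (P := bv*k*h). set (Q := bh*g*j). set (c := P/Q).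
  assert (hP : 0 < P) by (unfold P; repeat apply Rmult_lt_0_compat; lra).
  assert (hQ : 0 < Q) by (unfold Q; repeat apply Rmult_lt_0_compat; lra).
  assert (hc : 0 < c) by (unfold c; apply Rdiv_lt_0_compat; lra).
  assert (hcQ : c * Q = P) by (unfold c; field; lra).
  destruct (core h j g k c P Q (muh*h) (muv*g) (r1*j) muh hh hj hg hk hc hP hQ
     ltac:(nra) ltac:(nra) ltac:(nra) hmuh hcQ) as (e & n & dl & k0 & he & hn & hdl & hk0 & Hcore).
  set (F := malaria_field Lh Lv muh muv bh bv delta r1).
  set (E := mkState h j rr g k).
  set (V := fun x : state => Vq h j g k c e n ((Sh x - h)/h) ((Ih x - j)/j)
                 ((Sv x - g)/g) ((Iv x - k)/k) (Rh x - rr)).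
  set (Cm := h + j + g/c + k/c + 1/(2*n)).
  assert (hCm1 : 0 < g/c) by (apply Rdiv_lt_0_compat; lra).
  assert (hCm2 : 0 < k/c) by (apply Rdiv_lt_0_compat; lra).
  assert (hCm3 : 0 < 1/(2*n)) by (apply Rdiv_lt_0_compat; lra).
  assert (hCm : 0 < Cm) by (unfold Cm; lra).
  set (K := h + j + c*g + c*k + 4*e*(h*h+j*j) + 4*e*(g*g+k*k) + 2*n).
  assert (hK : 0 < K).
  { unfold K. assert (0 <= c*g) by (apply Rmult_le_pos; lra).
    assert (0 <= c*k) by (apply Rmult_le_pos; lra).
    assert (0 <= 4*e*(h*h+j*j)) by (apply Rmult_le_pos; [lra|]; assert (0 <= h*h) by apply sqle; assert (0 <= j*j) by apply sqle; lra).
    assert (0 <= 4*e*(g*g+k*k)) by (apply Rmult_le_pos; [lra|]; assert (0 <= g*g) by apply sqle; assert (0 <= k*k) by apply sqle; lra).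
    lra. }
  set (Dd := 1/(h*h)+1/(j*j)+1/(g*g)+1/(k*k)+1).
  assert (hD1 : 0 < 1/(h*h)) by (apply Rdiv_lt_0_compat; nra).
  assert (hD2 : 0 < 1/(j*j)) by (apply Rdiv_lt_0_compat; nra).
  assert (hD3 : 0 < 1/(g*g)) by (apply Rdiv_lt_0_compat; nra).
  assert (hD4 : 0 < 1/(k*k)) by (apply Rdiv_lt_0_compat; nra).
  assert (hDd : 0 < Dd) by (unfold Dd; lra).
  assert (Vlow : forall x, 0 <= V x /\
     (Sh x - Sh E)*(Sh x - Sh E) <= Cm * V x /\ (Ih x - Ih E)*(Ih x - Ih E) <= Cm * V x /\
     (Rh x - Rh E)*(Rh x - Rh E) <= Cm * V x /\ (Sv x - Sv E)*(Sv x - Sv E) <= Cm * V x /\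
     (Iv x - Iv E)*(Iv x - Iv E) <= Cm * V x).
  { intros x. unfold V. simpl.
    set (X := (Sh x - h)/h). set (Y := (Ih x - j)/j). set (Z := (Sv x - g)/g).
    set (W := (Iv x - k)/k). set (p := Rh x - rr).
    destruct (Vq_terms h j g k c e n X Y Z W p hh hj hg hk hc he hn) as (V0 & T1 & T2 & T3 & T4 & T5).
    set (VV := Vq h j g k c e n X Y Z W p) in *.
    assert (e1 : (Sh x - h)*(Sh x - h) = h*(h*X*X)) by (unfold X; field; lra).
    assert (e2 : (Ih x - j)*(Ih x - j) = j*(j*Y*Y)) by (unfold Y; field; lra).
    assert (e3 : (Sv x - g)*(Sv x - g) = g/c*(c*g*Z*Z)) by (unfold Z; field; lra).
    assert (e4 : (Iv x - k)*(Iv x - k) = k/c*(c*k*W*W)) by (unfold W; field; lra).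
    assert (e5 : p*p = 1/(2*n)*(2*n*(p*p))) by (field; lra).
    rewrite e1, e2, e3, e4, e5.
    assert (h*(h*X*X) <= h*VV) by (apply Rmult_le_compat_l; lra).
    assert (j*(j*Y*Y) <= j*VV) by (apply Rmult_le_compat_l; lra).
    assert (g/c*(c*g*Z*Z) <= g/c*VV) by (apply Rmult_le_compat_l; lra).
    assert (k/c*(c*k*W*W) <= k/c*VV) by (apply Rmult_le_compat_l; lra).
    assert (1/(2*n)*(2*n*(p*p)) <= 1/(2*n)*VV) by (apply Rmult_le_compat_l; lra).
    assert (h*VV <= Cm*VV) by (apply Rmult_le_compat_r; unfold Cm; lra).
    assert (j*VV <= Cm*VV) by (apply Rmult_le_compat_r; unfold Cm; lra).
    assert (g/c*VV <= Cm*VV) by (apply Rmult_le_compat_r; unfold Cm; lra).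
    assert (k/c*VV <= Cm*VV) by (apply Rmult_le_compat_r; unfold Cm; lra).
    assert (1/(2*n)*VV <= Cm*VV) by (apply Rmult_le_compat_r; unfold Cm; lra).
    repeat split; lra. }
  assert (Vup : forall x, V x <= K*Dd*(dist_state x E * dist_state x E)).
  { intros x. unfold V.
    destruct (dist_ge x E) as (a1 & a2 & a3 & a4 & a5). simpl in a1, a2, a3, a4, a5.
    set (ds := dist_state x E) in *.
    eapply Rle_trans. apply Vq_up; assumption. fold K.
    rewrite Rmult_assoc. apply Rmult_le_compat_l; [lra|].
    apply sq_abs in a1. apply sq_abs in a2. apply sq_abs in a3. apply sq_abs in a4. apply sq_abs in a5.
    assert (f1 : (Sh x - h)/h*((Sh x - h)/h) = 1/(h*h)*((Sh x - h)*(Sh x - h))) by (field; lra).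
    assert (f2 : (Ih x - j)/j*((Ih x - j)/j) = 1/(j*j)*((Ih x - j)*(Ih x - j))) by (field; lra).
    assert (f3 : (Sv x - g)/g*((Sv x - g)/g) = 1/(g*g)*((Sv x - g)*(Sv x - g))) by (field; lra).
    assert (f4 : (Iv x - k)/k*((Iv x - k)/k) = 1/(k*k)*((Iv x - k)*(Iv x - k))) by (field; lra).
    rewrite f1, f2, f3, f4.
    assert (1/(h*h)*((Sh x - h)*(Sh x - h)) <= 1/(h*h)*(ds*ds)) by (apply Rmult_le_compat_l; lra).
    assert (1/(j*j)*((Ih x - j)*(Ih x - j)) <= 1/(j*j)*(ds*ds)) by (apply Rmult_le_compat_l; lra).
    assert (1/(g*g)*((Sv x - g)*(Sv x - g)) <= 1/(g*g)*(ds*ds)) by (apply Rmult_le_compat_l; lra).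
    assert (1/(k*k)*((Iv x - k)*(Iv x - k)) <= 1/(k*k)*(ds*ds)) by (apply Rmult_le_compat_l; lra).
    unfold Dd. lra. }
  set (Hm := Rmin (Rmin h j) (Rmin g k)).
  assert (hHm : 0 < Hm) by (unfold Hm; repeat apply Rmin_pos; lra).
  assert (Hmh : Hm <= h) by (unfold Hm; eapply Rle_trans; [apply Rmin_l|apply Rmin_l]).
  assert (Hmj : Hm <= j) by (unfold Hm; eapply Rle_trans; [apply Rmin_l|apply Rmin_r]).
  assert (Hmg : Hm <= g) by (unfold Hm; eapply Rle_trans; [apply Rmin_r|apply Rmin_l]).
  assert (Hmk : Hm <= k) by (unfold Hm; eapply Rle_trans; [apply Rmin_r|apply Rmin_r]).
  set (r := dl*Hm).
  assert (hr : 0 < r) by (unfold r; apply Rmult_lt_0_compat; lra).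
  set (L := r*r/Cm).
  assert (hL : 0 < L) by (unfold L; apply Rdiv_lt_0_compat; nra).
  assert (CmL : Cm * L = r*r) by (unfold L; field; lra).
  assert (scale : forall u a, 0 < a -> Hm <= a -> u*u < r*r -> Rabs (u/a) <= dl).
  { intros u a ha Ha Hu. apply abs_sq in Hu; [|lra].
    unfold Rdiv. rewrite Rabs_mult, Rabs_inv, (Rabs_right a) by lra.
    apply Rmult_le_reg_r with a; [lra|]. rewrite Rmult_assoc, Rinv_l by lra.
    assert (dl*Hm <= dl*a) by (apply Rmult_le_compat_l; lra). unfold r in Hu. lra. }
  set (Dv := fun x : state => 2 * Vdot h j g k c P Q (muh*h) (muv*g) (r1*j) muh e n
      ((Sh x - h)/h) ((Ih x - j)/j) ((Sv x - g)/g) ((Iv x - k)/k) (Rh x - rr)).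
  set (kap := 2*k0/K).
  assert (hkap : 0 < kap) by (unfold kap; apply Rdiv_lt_0_compat; lra).
  assert (Hneg : forall x, V x < L -> Dv x <= - kap * V x).
  { intros x HV. destruct (Vlow x) as (V0 & l1 & l2 & l3 & l4 & l5). simpl in l1, l2, l3, l4, l5.
    assert (Cm * V x < r*r) by (rewrite <- CmL; apply Rmult_lt_compat_l; lra).
    assert (bX : Rabs ((Sh x - h)/h) <= dl) by (apply scale; lra).
    assert (bY : Rabs ((Ih x - j)/j) <= dl) by (apply scale; lra).
    assert (bZ : Rabs ((Sv x - g)/g) <= dl) by (apply scale; lra).
    assert (bW : Rabs ((Iv x - k)/k) <= dl) by (apply scale; lra).
    specialize (Hcore _ _ _ _ (Rh x - rr) bX bY bZ bW).
    assert (HVu := Vq_up h j g k c e n ((Sh x - h)/h) ((Ih x - j)/j) ((Sv x - g)/g)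
                   ((Iv x - k)/k) (Rh x - rr) hh hj hg hk hc he hn).
    fold K in HVu. fold (V x) in HVu.
    set (SS := (Sh x - h) / h * ((Sh x - h) / h) + (Ih x - j) / j * ((Ih x - j) / j) +
       (Sv x - g) / g * ((Sv x - g) / g) + (Iv x - k) / k * ((Iv x - k) / k) +
       (Rh x - rr) * (Rh x - rr)) in HVu.
    assert (ESS : ((Sh x - h) / h)^2 + ((Ih x - j) / j)^2 + ((Sv x - g) / g)^2 +
       ((Iv x - k) / k)^2 + (Rh x - rr)^2 = SS) by (unfold SS; ring).
    rewrite ESS in Hcore.
    assert (kap * V x <= kap * (K * SS)) by (apply Rmult_le_compat_l; lra).
    assert (kap * (K * SS) = 2*k0*SS) by (unfold kap; field; lra).
    unfold Dv. fold P Q. lra. }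
  assert (Hdec : forall xs, is_solution F xs -> V (xs 0) < L -> forall t, 0 <= t ->
            V (xs t) * (1 + kap * t) <= V (xs 0)).
  { intros xs Hsol. destruct Hsol as [[dSh cSh] [[dIh cIh] [[dRh cRh] [[dSv cSv] [dIv cIv]]]]].
    intros HV0 t0 ht0.
    apply (decay (fun s => V (xs s)) (fun s => Dv (xs s)) L kap); auto.
    - intros t ht.
      assert (dP : is_derive (fun s => Rh (xs s) - rr) t (r1*Ih (xs t) - muh*Rh (xs t))).
      { eapply D_eq. apply D_minus. apply dRh; exact ht. apply D_const.
        unfold F; simpl. req. }
      unfold V. eapply D_eq.
      apply (D_Vq h j g k c e n (fun s => (Sh (xs s) - h)/h) (fun s => (Ih (xs s) - j)/j)
        (fun s => (Sv (xs s) - g)/g) (fun s => (Iv (xs s) - k)/k) (fun s => Rh (xs s) - rr));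
        [apply D_aff; apply dSh; exact ht | apply D_aff; apply dIh; exact ht
        | apply D_aff; apply dSv; exact ht | apply D_aff; apply dIv; exact ht | exact dP].
      unfold Dv, P, Q.
      rewrite <- (ident Lh Lv muh muv bh bv (muh+delta+r1) r1 h j g k rr c e n
        ((Sh (xs t) - h)/h) ((Ih (xs t) - j)/j) ((Sv (xs t) - g)/g) ((Iv (xs t) - k)/k) (Rh (xs t) - rr)
        (Sh (xs t)) (Ih (xs t)) (Rh (xs t)) (Sv (xs t)) (Iv (xs t)))
        by first [assumption | field; lra | ring].
      unfold F. cbn [Sh Ih Rh Sv Iv malaria_field]. reflexivity.
    - unfold V. apply fl_Vq; try (apply fl_aff; assumption).
      unfold Rminus. apply fl_plus; [exact cRh | apply fl_const].
    - intros t _. apply Vlow. }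
  assert (dpos : forall x y, 0 <= dist_state x y).
  { intros x y. destruct (dist_ge x y) as [a1 _]. assert (0 <= Rabs (Sh x - Sh y)) by apply Rabs_pos. lra. }
  assert (Vt : forall x eps, 0 < eps -> Cm * V x < eps * eps -> dist_state x E < eps).
  { intros x eps heps Hx. destruct (Vlow x) as (V0 & l1 & l2 & l3 & l4 & l5).
    apply dist_lt; apply abs_sq; lra. }
  split.
  - intros eps heps.
    set (rho := Rmin r eps).
    assert (hrho : 0 < rho) by (apply Rmin_pos; lra).
    assert (rr1 : rho <= r) by apply Rmin_l. assert (rr2 : rho <= eps) by apply Rmin_r.
    assert (hB : 0 < rho*rho/Cm) by (apply Rdiv_lt_0_compat; nra).
    destruct (small_d (K*Dd) (rho*rho/Cm) ltac:(nra) hB) as [d [hd Hd]].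
    exists d. split; [exact hd|]. intros xs Hsol Hx0 t ht.
    assert (HV0 : V (xs 0) < rho*rho/Cm).
    { eapply Rle_lt_trans. apply Vup. apply Hd. split; [apply dpos|exact Hx0]. }
    assert (rho*rho/Cm <= L).
    { unfold L. unfold Rdiv. apply Rmult_le_compat_r.
      - left; apply Rinv_0_lt_compat; lra.
      - nra. }
    assert (HD := Hdec xs Hsol ltac:(lra) t ht).
    destruct (Vlow (xs t)) as (Vp & _).
    assert (V (xs t) <= V (xs t) * (1 + kap*t)).
    { assert (0 <= V (xs t) * (kap*t)) by (apply Rmult_le_pos; [lra|apply Rmult_le_pos; lra]). lra. }
    apply Vt; [lra|].
    assert (Cm * V (xs t) < Cm * (rho*rho/Cm)) by (apply Rmult_lt_compat_l; lra).
    replace (Cm * (rho*rho/Cm)) with (rho*rho) in * by (field; lra).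
    assert (rho*rho <= eps*eps) by nra. lra.
  - destruct (small_d (K*Dd) L ltac:(nra) hL) as [d [hd Hd]].
    exists d. split; [exact hd|]. intros xs Hsol Hx0.
    assert (HV0 : V (xs 0) < L).
    { eapply Rle_lt_trans. apply Vup. apply Hd. split; [apply dpos|exact Hx0]. }
    apply is_lim_spec. intros eps. simpl.
    set (V0 := V (xs 0)).
    destruct (Vlow (xs 0)) as (hV0 & _).
    assert (he2 : 0 < eps*eps) by (assert (0 < eps) by apply cond_pos; nra).
    exists (Rmax 0 (Cm*V0/(kap*(eps*eps)))). intros t ht.
    assert (ht0 : 0 < t) by (eapply Rle_lt_trans; [apply Rmax_l|exact ht]).
    assert (ht1 : Cm*V0/(kap*(eps*eps)) < t) by (eapply Rle_lt_trans; [apply Rmax_r|exact ht]).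
    assert (Cm*V0 < kap*(eps*eps)*t).
    { apply Rmult_lt_compat_l with (r := kap*(eps*eps)) in ht1; [|nra].
      replace (kap * (eps * eps) * (Cm * V0 / (kap * (eps * eps)))) with (Cm*V0) in ht1 by (field; nra).
      exact ht1. }
    assert (HD := Hdec xs Hsol HV0 t ltac:(lra)). fold V0 in HD.
    destruct (Vlow (xs t)) as (Vp & _).
    assert (Cm * V (xs t) < eps*eps).
    { assert (Cm * (V (xs t) * (1 + kap*t)) <= Cm * V0) by (apply Rmult_le_compat_l; lra).
      assert (0 < 1 + kap*t) by nra.
      assert ((Cm * V (xs t)) * (1 + kap*t) < (eps*eps) * (1 + kap*t)) by nra.
      apply Rmult_lt_reg_r with (1 + kap*t); lra. }
    rewrite Rminus_0_r, Rabs_right by (apply Rle_ge, dpos).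
    apply Vt; [apply cond_pos|exact H0].
Qed.

Theorem theorem3p19 (Lh Lv muh muv bh bv delta r1 : R)
  (hLh : 0 < Lh) (hLv : 0 < Lv) (hmuh : 0 < muh) (hmuv : 0 < muv)
  (hbh : 0 <= bh) (hbv : 0 <= bv) (hdelta : 0 <= delta) (hr1 : 0 <= r1)
  (hR0 : 1 < repro_number Lh Lv muh muv bh bv delta r1) :
  exists Estar : state,
    is_equilibrium (malaria_field Lh Lv muh muv bh bv delta r1) Estar /\
    nonneg_state Estar /\ Estar <> DFE Lh Lv muh muv /\
    (forall E : state,
       is_equilibrium (malaria_field Lh Lv muh muv bh bv delta r1) E ->
       nonneg_state E -> E <> DFE Lh Lv muh muv -> E = Estar) /\
    locally_asymptotically_stable (malaria_field Lh Lv muh muv bh bv delta r1) Estar.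
Proof.
  set (a := muh + delta + r1).
  assert (ha : 0 < a) by (unfold a; lra).
  assert (Hz : 1 < bh * (Lv / muv) / a * (bv * (Lh / muh) / muv)).
  { unfold repro_number in hR0. fold a in hR0.
    destruct (Rle_dec (bh * (Lv / muv) / a * (bv * (Lh / muh) / muv)) 1) as [Hle|Hgt].
    - exfalso. assert (sqrt (bh * (Lv / muv) / a * (bv * (Lh / muh) / muv)) <= 1).
      { rewrite <- sqrt_1. apply sqrt_le_1_alt. exact Hle. }
      lra.
    - lra. }
  assert (HR : a*muh*muv*muv < bv*bh*Lv*Lh).
  { assert (bh * (Lv / muv) / a * (bv * (Lh / muh) / muv) * (a*muh*muv*muv) = bv*bh*Lv*Lh)
      by (field; repeat split; lra).
    assert (0 < a*muh*muv*muv) by (repeat apply Rmult_lt_0_compat; lra).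
    assert (1 * (a*muh*muv*muv) < bh * (Lv / muv) / a * (bv * (Lh / muh) / muv) * (a*muh*muv*muv))
      by (apply Rmult_lt_compat_r; lra).
    lra. }
  assert (hbh' : 0 < bh).
  { destruct (Req_dec bh 0) as [e|e]; [|lra]. rewrite e in HR.
    assert (0 < a*muh*muv*muv) by (repeat apply Rmult_lt_0_compat; lra). nra. }
  assert (hbv' : 0 < bv).
  { destruct (Req_dec bv 0) as [e|e]; [|lra]. rewrite e in HR.
    assert (0 < a*muh*muv*muv) by (repeat apply Rmult_lt_0_compat; lra). nra. }
  assert (hBB : 0 < muh*muv + bv*Lv).
  { assert (0 < muh*muv) by (apply Rmult_lt_0_compat; lra).
    assert (0 < bv*Lv) by (apply Rmult_lt_0_compat; lra). lra. }
  assert (hbB : 0 < bh*(muh*muv + bv*Lv)) by (apply Rmult_lt_0_compat; lra).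
  set (Dn := a*bh*(muh*muv + bv*Lv)).
  assert (hDn : 0 < Dn).
  { unfold Dn. apply Rmult_lt_0_compat; [nra|]. assert (0 < bv*Lv) by nra. nra. }
  set (Ihs := (bv*bh*Lv*Lh - a*muh*muv*muv)/Dn).
  assert (hI : 0 < Ihs) by (unfold Ihs; apply Rdiv_lt_0_compat; lra).
  assert (KeyI : Ihs * Dn = bv*bh*Lv*Lh - a*muh*muv*muv) by (unfold Ihs; field; lra).
  set (Shs := (Lh - a*Ihs)/muh).
  assert (hS : 0 < Shs).
  { unfold Shs. apply Rdiv_lt_0_compat; [|lra].
    assert (Lh - a*Ihs = muh*muv*(Lh*bh + a*muv)/(bh*(muh*muv + bv*Lv))).
    { apply Rmult_eq_reg_r with Dn; [|lra].
      unfold Rminus. rewrite Rmult_plus_distr_r. 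
      replace (- (a*Ihs) * Dn) with (- a * (Ihs*Dn)) by ring. rewrite KeyI.
      unfold Dn. field. lra. }
    rewrite H. apply Rdiv_lt_0_compat.
    - assert (0 < Lh*bh) by nra. assert (0 < a*muv) by nra.
      repeat apply Rmult_lt_0_compat; lra.
    - lra. }
  assert (hbI : 0 < bh*Ihs) by (apply Rmult_lt_0_compat; lra).
  set (Svs := Lv/(muv + bh*Ihs)).
  assert (hSv : 0 < Svs) by (unfold Svs; apply Rdiv_lt_0_compat; lra).
  set (Ivs := bh*Svs*Ihs/muv).
  assert (hIv : 0 < Ivs) by (unfold Ivs; apply Rdiv_lt_0_compat; [apply Rmult_lt_0_compat; [apply Rmult_lt_0_compat|]|]; lra).
  set (Rhs := r1*Ihs/muh).
  assert (hRh : 0 <= Rhs) by (unfold Rhs; apply Rle_mult_inv_pos; [apply Rmult_le_pos|]; lra).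
  assert (E5 : bh*Svs*Ihs - muv*Ivs = 0) by (unfold Ivs; field; lra).
  assert (E4 : Lv - bh*Svs*Ihs - muv*Svs = 0) by (unfold Svs; field; lra).
  assert (E3 : r1*Ihs - muh*Rhs = 0) by (unfold Rhs; field; lra).
  assert (E2 : bv*Ivs*Shs - a*Ihs = 0).
  { assert (br : bv*bh*Lv*(Lh - a*Ihs) - a*muh*muv*(muv + bh*Ihs) = 0).
    { unfold Dn in KeyI. lra. }
    assert (bv*Ivs*Shs - a*Ihs =
      Ihs * (bv*bh*Lv*(Lh - a*Ihs) - a*muh*muv*(muv + bh*Ihs)) / (muv*muh*(muv+bh*Ihs))).
    { unfold Ivs, Svs, Shs. field. repeat split; lra. }
    rewrite H, br. field. repeat split; lra. }
  assert (E1 : Lh - bv*Ivs*Shs - muh*Shs = 0).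
  { assert (muh*Shs = Lh - a*Ihs) by (unfold Shs; field; lra). lra. }
  exists (mkState Shs Ihs Rhs Svs Ivs).
  split; [|split; [|split; [|split]]].
  - unfold is_equilibrium, malaria_field, origin. simpl. fold a.
    f_equal; lra.
  - unfold nonneg_state; simpl. repeat split; lra.
  - intros Heq. apply (f_equal Ih) in Heq. simpl in Heq. lra.
  - intros [s i rh sv iv] Heq Hnn Hne.
    unfold is_equilibrium, malaria_field, origin in Heq. simpl in Heq. fold a in Heq.
    injection Heq as q1 q2 q3 q4 q5.
    unfold nonneg_state in Hnn; simpl in Hnn.
    destruct (Req_dec i 0) as [Hi0|Hi0].
    + exfalso. apply Hne. subst i. unfold DFE.
      assert (rh = 0) by (apply (Rmult_eq_reg_l muh); lra).
      assert (iv = 0) by (apply (Rmult_eq_reg_l muv); lra).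
      subst rh iv.
      f_equal.
      * apply (Rmult_eq_reg_l muh); [|lra]. field_simplify; lra.
      * apply (Rmult_eq_reg_l muv); [|lra]. field_simplify; lra.
    + assert (hi : 0 < i) by lra.
      assert (m1 : muh*s = Lh - a*i) by lra.
      assert (m2 : sv*(muv + bh*i) = Lv) by lra.
      assert (m3 : muv*iv = bh*sv*i) by lra.
      assert (m4 : bv*iv*s = a*i) by lra.
      assert (m5 : a*muv = bv*bh*sv*s).
      { apply (Rmult_eq_reg_l i); [|lra].
        replace (i*(a*muv)) with (muv*(a*i)) by ring. rewrite <- m4.
        replace (muv*(bv*iv*s)) with (bv*s*(muv*iv)) by ring. rewrite m3. ring. }
      assert (m6 : a*muv*(muv + bh*i)*muh = bv*bh*Lv*(Lh - a*i)).
      { rewrite m5, <- m1, <- m2. ring. }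
      assert (hii : i = Ihs).
      { apply (Rmult_eq_reg_r Dn); [|lra]. rewrite KeyI. unfold Dn. lra. }
      subst i.
      assert (s = Shs) by (unfold Shs; apply (Rmult_eq_reg_l muh); [|lra]; rewrite m1; field; lra).
      assert (sv = Svs).
      { unfold Svs. apply (Rmult_eq_reg_r (muv + bh*Ihs)); [|lra]. rewrite m2. field. nra. }
      subst s sv.
      assert (iv = Ivs) by (unfold Ivs; apply (Rmult_eq_reg_l muv); [|lra]; rewrite m3; field; lra).
      assert (rh = Rhs) by (unfold Rhs; apply (Rmult_eq_reg_l muh); [|lra]; field_simplify; lra).
      subst iv rh. reflexivity.
  - apply las_model; try lra; unfold a in E2; lra.
Qed.
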